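(* Let $c\ge2$, let $G$ be a graph, $k\ge0$, $v\in V(G)$, and let $H_v\subseteq V(G)\setminus\{v\}$ be such that $G\setminus H_v$ contains no $\theta_c$ minor. Let $D_1,\dots,D_s$ be the connected components of $G\setminus(H_v\cup\{v\})$ that contain a neighbor of $v$, and assume each $D_i$ contains a vertex adjacent to some vertex of $H_v$. Let $\mathcal{G}$ be the bipartite graph with parts $H_v$ and $D=\{d_1,\dots,d_s\}$, where $w\in H_v$ is adjacent to $d_i$ iff $w$ has a neighbor in $D_i$. Let $S\subseteq H_v$ and $T\subseteq D$ be such that $S$ has $|S|$ $c$-stars in $T$ in $\mathcal{G}$ and every neighbor in $\mathcal{G}$ of a vertex of $T$ lies in $S$. Let $G_R$ be obtained from $G$ by deleting all edges between $v$ and vertices of $\bigcup_{d_i\in T}D_i$, and, for each $w\in S$, adding edges between $v$ and $w$ so that $v$ and $w$ are joined by at least $c$ parallel edges (adding none if they already are). Then $G$ has a set of at most $k$ vertices whose deletion leaves a graph with no $\theta_c$ minor if and only if $G_R$ has such a set.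
   Context: Graphs may have parallel edges; contraction keeps parallel edges and deletes loops. $\theta_c$ is the graph with two vertices joined by $c$ parallel edges. In a bipartite graph with parts $A,B$, for $S\subseteq A$, $T\subseteq B$, $S$ has $|S|$ $c$-stars in $T$ if to each $x\in S$ one can associate $F_x\subseteq N(x)\cap T$ with $|F_x|=c$ and $F_x\cap F_y=\emptyset$ for distinct $x,y\in S$. *)

(* Defs.v *)
From mathcomp Require Import all_boot.
Set Implicit Arguments. Unset Strict Implicit. Unset Printing Implicit Defensive.

(* A (multi)graph on the finite vertex type V: m x y = number of parallel
   edges between x and y; symmetric and loopless. *)
Definition is_multigraph (V : finType) (m : V -> V -> nat) : Prop :=
  (forall x y, m x y = m y x) /\ (forall x, m x x = 0).

Definition adj_in (V : finType) (m : V -> V -> nat) (A : {set V}) : rel V :=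
  fun a b => [&& a \in A, b \in A & 0 < m a b].

Definition connected_in (V : finType) (m : V -> V -> nat) (A : {set V}) : Prop :=
  forall x y, x \in A -> y \in A -> connect (adj_in m A) x y.

(* A model of the multigraph (W, mH) as a minor of G[U] where G = (V, m):
   pairwise disjoint nonempty connected branch sets inside U, and for each
   pair of distinct vertices of H at least as many G-edges between the
   corresponding branch sets as parallel edges in H. *)
Definition minor_model (V W : finType) (m : V -> V -> nat) (U : {set V})
    (mH : W -> W -> nat) (phi : W -> {set V}) : Prop :=
  [/\ forall w, phi w \subset U,
      forall w, phi w != set0,
      forall w1 w2, w1 != w2 -> [disjoint phi w1 & phi w2],
      forall w, connected_in m (phi w) &
      forall w1 w2, w1 != w2 ->
        mH w1 w2 <= \sum_(x in phi w1) \sum_(y in phi w2) m x y].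

Definition has_minor_in (V W : finType) (m : V -> V -> nat) (U : {set V})
    (mH : W -> W -> nat) : Prop :=
  exists phi : W -> {set V}, minor_model m U mH phi.

Definition theta (c : nat) : bool -> bool -> nat :=
  fun x y => if x != y then c else 0.

Definition theta_free_after (V : finType) (m : V -> V -> nat) (c : nat)
    (X : {set V}) : Prop :=
  ~ has_minor_in m (~: X) (theta c).

Definition theta_deletion (V : finType) (m : V -> V -> nat) (c k : nat) : Prop :=
  exists X : {set V}, #|X| <= k /\ theta_free_after m c X.

Definition comp_in (V : finType) (m : V -> V -> nat) (U : {set V}) (x : V)
  : {set V} := [set y in U | connect (adj_in m U) x y].

Definition Dcomps (V : finType) (m : V -> V -> nat) (H : {set V}) (v : V)
  : {set {set V}} :=
  let U := ~: (H :|: [set v]) in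
  [set comp_in m U x | x in [set x in U | 0 < m v x]].

(* adjacency in the auxiliary bipartite graph: w has a neighbour in C *)
Definition badj (V : finType) (m : V -> V -> nat) (w : V) (C : {set V}) : bool :=
  [exists y in C, 0 < m w y].

Definition has_c_stars (V : finType) (m : V -> V -> nat) (c : nat)
    (S : {set V}) (T : {set {set V}}) : Prop :=
  exists F : V -> {set {set V}},
    (forall x, x \in S -> F x \subset T /\ (forall C, C \in F x -> badj m x C)
                       /\ #|F x| = c) /\
    (forall x y, x \in S -> y \in S -> x != y -> [disjoint F x & F y]).

Definition reduced (V : finType) (m : V -> V -> nat) (c : nat) (v : V)
    (S : {set V}) (T : {set {set V}}) : V -> V -> nat :=
  let DT := \bigcup_(C in T) C in
  fun x y =>
    if ((x == v) && (y \in DT)) || ((y == v) && (x \in DT)) then 0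
    else if ((x == v) && (y \in S)) || ((y == v) && (x \in S)) then maxn (m x y) c
    else m x y.

(* Main.v *)
Require Import Defs.
From mathcomp Require Import all_boot.
Set Implicit Arguments. Unset Strict Implicit. Unset Printing Implicit Defensive.

Section Gen.
Variables (V : finType) (m : V -> V -> nat).
Hypothesis msym : forall x y, m x y = m y x.

Definition tm (U : {set V}) (c : nat) (P Q : {set V}) :=
  [/\ P \subset U, Q \subset U, P != set0, Q != set0 &
   [/\ [disjoint P & Q], connected_in m P, connected_in m Q &
       c <= \sum_(x in P) \sum_(y in Q) m x y]].

Lemma sum_swap (P Q : {set V}) :
  \sum_(x in P) \sum_(y in Q) m x y = \sum_(y in Q) \sum_(x in P) m y x.
Proof. rewrite exchange_big; apply: eq_bigr => y _; apply: eq_bigr => x _; exact: msym. Qed.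

Lemma tm_swap U c P Q : tm U c P Q -> tm U c Q P.
Proof.
case=> h1 h2 h3 h4 [h5 h6 h7 h8]; split => //; split => //.
  by rewrite disjoint_sym.
by rewrite -sum_swap.
Qed.

Lemma hm_tm U c : has_minor_in m U (theta c) <-> exists P Q, tm U c P Q.
Proof.
split.
  case=> phi [h1 h2 h3 h4 h5]; exists (phi true), (phi false); split => //; split => //.
  - exact: h3.
  - by have := h5 true false isT; rewrite /theta.
case=> P [Q] [h1 h2 h3 h4 [h5 h6 h7 h8]].
exists (fun b => if b then P else Q); split.
- by case.
- by case.
- by case; case => // _; rewrite // disjoint_sym.
- by case.
- case; case => // _; rewrite /theta //=.
  by rewrite -sum_swap.
Qed.

Lemma adj_sym (A : {set V}) : symmetric (adj_in m A).
Proof. by move=> a b; rewrite /adj_in msym; case: (a \in A); case: (b \in A). Qed.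

Lemma cclosed (e : rel V) (a : pred V) x y :
  (forall u w, a u -> e u w -> a w) -> a x -> connect e x y -> a y.
Proof.
move=> H ax /connectP [p pth ->]; elim: p x ax pth => //= z p IH x ax /andP[exz pth].
exact: IH (H _ _ ax exz) pth.
Qed.

Lemma tm_sub (U U' : {set V}) c P Q : U \subset U' -> tm U c P Q -> tm U' c P Q.
Proof.
move=> sU [h1 h2 h3 h4 h5]; split => //; exact: subset_trans sU.
Qed.

Lemma connected_eq (m' : V -> V -> nat) (P : {set V}) :
  {in P &, m =2 m'} -> connected_in m P -> connected_in m' P.
Proof.
move=> e cP x y xP yP; rewrite -(@eq_connect _ (adj_in m P)); first exact: cP.
move=> a b; rewrite /adj_in; case aP: (a \in P); case bP: (b \in P) => //=.
by rewrite e.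
Qed.

End Gen.

Lemma tm_eq (V : finType) (m m' : V -> V -> nat) (U : {set V}) c P Q :
  {in U &, m =2 m'} -> tm m U c P Q -> tm m' U c P Q.
Proof.
move=> e [h1 h2 h3 h4 [h5 h6 h7 h8]]; split => //; split => //.
- apply: connected_eq h6 => x y xP yP; apply: e; exact: (subsetP h1).
- apply: connected_eq h7 => x y xP yP; apply: e; exact: (subsetP h2).
rewrite (leq_trans h8) // leq_eqVlt; apply/orP; left; apply/eqP.
apply: eq_bigr => x xP; apply: eq_bigr => y yQ; apply: e.
  exact: (subsetP h1). exact: (subsetP h2).
Qed.

Section Glue.
Variables (V : finType) (m : V -> V -> nat).
Hypothesis msym : forall x y, m x y = m y x.

Definition noedge (A B : {set V}) :=
  forall x y, x \in A -> x \notin B -> y \in B -> y \notin A -> m x y = 0.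

Lemma noedge_sym A B : noedge A B -> noedge B A.
Proof. by move=> h x y xB xA yA yB; rewrite msym; apply: h. Qed.

Lemma side_closed A B (P : {set V}) x y : noedge A B ->
  P \subset A :|: B -> [disjoint P & A :&: B] ->
  x \in A -> connect (adj_in m P) x y -> y \in A.
Proof.
move=> ne PAB dP xA; apply: (cclosed (a := fun z => z \in A)) => // u w uA /and3P[uP wP muw].
have uB : u \notin B.
  apply/negP => uB; move: (disjointFr dP uP); by rewrite inE uA uB.
move: (subsetP PAB w wP); rewrite inE; case/orP => // wB.
apply/negPn/negP => wA; move: muw; by rewrite ne.
Qed.

Lemma side A B (P : {set V}) : noedge A B -> connected_in m P ->
  P \subset A :|: B -> [disjoint P & A :&: B] -> P \subset A \/ P \subset B.
Proof.
move=> ne cP PAB dP.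
case: (set_0Vmem P) => [->|[x xP]]; first by left; rewrite sub0set.
move: (subsetP PAB x xP); rewrite inE; case/orP => xA.
  left; apply/subsetP => y yP; apply: side_closed ne PAB dP xA (cP x y xP yP).
right; apply/subsetP => y yP.
apply: (@side_closed B A P x y (noedge_sym ne)) => //.
  by rewrite setUC.
  by rewrite setIC.
exact: cP.
Qed.
End Glue.

Lemma mydisjP (T : finType) (A B : {set T}) :
  reflect (forall x, x \in A -> x \in B -> False) [disjoint A & B].
Proof.
rewrite -setI_eq0; apply: (iffP eqP) => [e x xA xB | h].
  by have := in_set0 x; rewrite -e inE xA xB.
by apply/eqP/set0Pn => [[x /setIP [xA xB]]]; apply: (h x).
Qed.

Section Glue2.
Variables (V : finType) (m : V -> V -> nat).
Hypothesis msym : forall x y, m x y = m y x.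

Lemma core (A B : {set V}) v (P Q : {set V}) c : noedge m A B -> A :&: B \subset [set v] -> 0 < c ->
  Q \subset A -> [disjoint Q & A :&: B] -> tm m (A :|: B) c P Q ->
  tm m A c (P :&: A) Q.
Proof.
move=> ne hAB c0 QA dQ [PU QU Pn Qn [dPQ cP cQ hsum]].
have eqs : \sum_(x in P) \sum_(y in Q) m x y = \sum_(x in P :&: A) \sum_(y in Q) m x y.
  rewrite (big_setID A) /= [X in _ + X]big1 ?addn0 // => x /setDP [xP xnA].
  apply: big1 => y yQ.
  have xB : x \in B by move: (subsetP PU x xP); rewrite inE (negbTE xnA).
  apply: (noedge_sym msym ne) => //.
    exact: (subsetP QA).
  apply/negP => yB; apply: (mydisjP _ _ dQ y yQ); rewrite inE yB andbT.
  exact: (subsetP QA).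
split.
- exact: subsetIr.
- exact: QA.
- case: (set_0Vmem (P :&: A)) => [e|[x xPA]]; last by apply/set0Pn; exists x.
  by move: hsum; rewrite eqs e big_set0 leqNgt c0.
- exact: Qn.
split.
- exact: disjointWl (subsetIl _ _) dPQ.
- case: (boolP [disjoint P & A :&: B]) => dP.
    case: (side msym ne cP PU dP) => sP.
      by rewrite (setIidPl sP).
    move=> x y /setIP [xP xA]; exfalso; apply: (mydisjP _ _ dP x xP).
    by rewrite inE xA (subsetP sP).
  have [z zP zAB] : exists2 z, z \in P & z \in A :&: B.
    move: dP; rewrite -setI_eq0 => /set0Pn [z /setIP [zP zAB]]; by exists z.
  have zv : z = v by apply/set1P; exact: (subsetP hAB).
  subst z; move/setIP: zAB => [vA vB].
  have vPA : v \in P :&: A by rewrite inE zP vA.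
  have inPA : forall u, connect (adj_in m (P :&: A)) v u -> u \in P :&: A.
    move=> u; apply: (cclosed (a := fun z => z \in P :&: A)) => // a b _ /and3P [_ bPA _].
    exact: bPA.
  have R : forall y, y \in P -> ((y \in B) && (y \notin A)) || connect (adj_in m (P :&: A)) v y.
    move=> y yP; apply: (cclosed (a := fun y => ((y \in B) && (y \notin A)) || connect (adj_in m (P :&: A)) v y) (e := adj_in m P) (x := v)); last exact: cP.
      move=> u w /orP [/andP [uB unA] | cu] /and3P [uP wP muw].
        case wA: (w \in A).
          case wB: (w \in B).
            have : w \in [set v] by apply: (subsetP hAB); rewrite inE wA wB.
            by move/set1P => ->; rewrite connect0 orbT.
          by move: muw; rewrite msym ne // wB.
        by move: (subsetP PU w wP); rewrite inE wA /= => ->.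
      case wA: (w \in A).
        apply/orP; right; apply: (connect_trans cu (connect1 _)).
        by rewrite /adj_in (inPA u cu) inE wP wA muw.
      by move: (subsetP PU w wP); rewrite inE wA /= => ->.
    by rewrite connect0 orbT.
  move=> x y /setIP [xP xA] /setIP [yP yA].
  move: (R x xP) (R y yP); rewrite xA yA !andbF /= => cx cy.
  apply: connect_trans cy.
  by rewrite (sym_connect_sym (adj_sym msym _)).
- exact: cQ.
- by rewrite -eqs.
Qed.
End Glue2.

Lemma glue (V : finType) (m : V -> V -> nat) (msym : forall x y, m x y = m y x)
  (A B : {set V}) v (P Q : {set V}) c :
  noedge m A B -> A :&: B \subset [set v] -> 0 < c -> tm m (A :|: B) c P Q ->
  (exists P Q, tm m A c P Q) \/ (exists P Q, tm m B c P Q).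
Proof.
move=> ne hAB c0.
have key : forall P Q : {set V}, [disjoint Q & A :&: B] -> tm m (A :|: B) c P Q ->
  (exists P Q, tm m A c P Q) \/ (exists P Q, tm m B c P Q).
  move=> P0 Q0 dQ t; have [_ QU _ _ [_ _ cQ _]] := t.
  case: (side msym ne cQ QU dQ) => QS.
    by left; exists (P0 :&: A), Q0; apply: (core msym ne hAB).
  right; exists (P0 :&: B), Q0; apply: (core (v:=v) msym (noedge_sym msym ne)) => //.
  - by rewrite setIC.
  - by rewrite setIC.
  - by rewrite setUC.
move=> t; case: (boolP [disjoint Q & A :&: B]) => dQ; first exact: key t.
apply: (key Q P _ (tm_swap msym t)).
have [_ _ _ _ [dPQ _ _ _]] := t.
move: dQ; rewrite -setI_eq0 => /set0Pn [z /setIP [zQ zAB]].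
have zv : z = v by apply/set1P; exact: (subsetP hAB).
subst z.
apply/mydisjP => x xP xAB.
have xv : x = v by apply/set1P; exact: (subsetP hAB).
subst x; exact: (mydisjP _ _ dPQ v xP zQ).
Qed.

Section Comp.
Variables (V : finType) (m : V -> V -> nat).
Hypothesis msym : forall x y, m x y = m y x.

Lemma csym (U : {set V}) : connect_sym (adj_in m U).
Proof. exact: sym_connect_sym (adj_sym msym U). Qed.

Lemma comp_closed (U : {set V}) x y z : y \in comp_in m U x -> z \in U -> 0 < m y z ->
  z \in comp_in m U x.
Proof.
rewrite !inE => /andP [yU cy] zU myz; rewrite zU /=.
apply: (connect_trans cy); apply: connect1; by rewrite /adj_in yU zU myz.
Qed.

Lemma comp_same (U : {set V}) x1 x2 a : a \in comp_in m U x1 -> a \in comp_in m U x2 ->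
  comp_in m U x1 = comp_in m U x2.
Proof.
rewrite !inE => /andP [aU c1] /andP [_ c2]; apply/setP => y; rewrite !inE.
by rewrite (same_connect (csym U) c1) (same_connect (csym U) c2).
Qed.

Lemma comp_conn (U : {set V}) x : x \in U -> connected_in m (comp_in m U x).
Proof.
move=> xU.
have key : forall a, a \in comp_in m U x -> connect (adj_in m (comp_in m U x)) x a.
  move=> a; rewrite inE => /andP [aU ca].
  suff /andP [] : (a \in comp_in m U x) && connect (adj_in m (comp_in m U x)) x a by [].
  apply: (cclosed (a := fun z => (z \in comp_in m U x) && connect (adj_in m (comp_in m U x)) x z) (e := adj_in m U) (x := x) (y := a)) => //.
    2: by rewrite connect0 andbT inE xU connect0.
  move=> u w /andP [uC cu] /and3P [uU wU muw].
  have wC := comp_closed uC wU muw.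
  rewrite wC /=; apply: (connect_trans cu); apply: connect1.
  by rewrite /adj_in uC wC muw.
move=> a b aC bC; apply: connect_trans (key b bC).
by rewrite csym; apply: key.
Qed.
End Comp.

Lemma sum_sub (V : finType) (A A' : {set V}) (F : V -> nat) :
  A \subset A' -> \sum_(i in A) F i <= \sum_(i in A') F i.
Proof. by move=> sA; rewrite [X in _ <= X](big_setID A) /= (setIidPr sA) leq_addr. Qed.

Lemma conn1 (V : finType) (m : V -> V -> nat) w : connected_in m [set w].
Proof. by move=> x y; rewrite !inE => /eqP -> /eqP ->; exact: connect0. Qed.

Section Main.
Variables (V : finType) (m : V -> V -> nat) (c k : nat) (v : V)
    (H : {set V}) (S : {set V}) (T : {set {set V}}).
Hypothesis msym : forall x y, m x y = m y x.
Hypothesis c2 : 2 <= c.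
Hypothesis vH : v \notin H.
Hypothesis hfree : ~ has_minor_in m (~: H) (theta c).
Hypothesis SH : S \subset H.
Hypothesis TD : T \subset Dcomps m H v.
Hypothesis hS : forall C w, C \in T -> w \in H -> badj m w C -> w \in S.

Let U0 := ~: (H :|: [set v]).
Let DT := \bigcup_(C in T) C.
Let R := reduced m c v S T.

Lemma Dform C : C \in Dcomps m H v ->
  exists2 x, (x \in U0) && (0 < m v x) & C = comp_in m U0 x.
Proof. by case/imsetP => x; rewrite inE => hx ->; exists x. Qed.

Lemma Dsub C y : C \in Dcomps m H v -> y \in C -> (y \notin H) && (y != v).
Proof.
case/Dform => x _ -> ; rewrite inE => /andP [yU _]; move: yU.
by rewrite /U0 !inE negb_or.
Qed.

Lemma Dsame C1 C2 a : C1 \in Dcomps m H v -> C2 \in Dcomps m H v ->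
  a \in C1 -> a \in C2 -> C1 = C2.
Proof.
case/Dform => x1 _ -> ; case/Dform => x2 _ ->.
exact: (@comp_same V m msym U0 x1 x2 a).
Qed.

Lemma Dconn C : C \in Dcomps m H v -> connected_in m C.
Proof. case/Dform => x /andP [xU _] ->; exact: (@comp_conn V m msym U0 x xU). Qed.

Lemma Dnbr C : C \in Dcomps m H v -> exists2 x, x \in C & 0 < m v x.
Proof.
case/Dform => x /andP [xU mvx] ->; exists x => //; by rewrite inE xU connect0.
Qed.

Lemma DTP y : reflect (exists2 C, C \in T & y \in C) (y \in DT).
Proof. exact: bigcupP. Qed.

Lemma DTsub y : y \in DT -> (y \notin H) && (y != v).
Proof. case/DTP => C CT yC; exact: Dsub (subsetP TD C CT) yC. Qed.

Lemma vDT : v \notin DT.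
Proof. by apply/negP => /DTsub; rewrite eqxx andbF. Qed.

Lemma SDT y : y \in S -> y \notin DT.
Proof.
move=> yS; apply/negP => /DTsub; by rewrite (subsetP SH y yS).
Qed.

Lemma vS : v \notin S.
Proof. by apply/negP => /(subsetP SH); rewrite (negbTE vH). Qed.

Lemma Rsym x y : R x y = R y x.
Proof.
rewrite /R /reduced -/DT (orbC ((y == v) && _)) (orbC ((y == v) && (x \in S))).
by rewrite msym.
Qed.

Lemma agree (U' : {set V}) :
  (v \in U' -> forall y, y \in U' -> (y \notin DT) && (y \notin S)) ->
  {in U' &, R =2 m}.
Proof.
move=> h x y xU yU; rewrite /R /reduced -/DT.
case: (x =P v) => [xv|/eqP xv]; case: (y =P v) => [yv|/eqP yv] /=.
- by subst; rewrite (negbTE vDT) (negbTE vS).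
- subst x; have /andP [h1 h2] := h xU y yU; by rewrite (negbTE h1) (negbTE h2).
- subst y; have /andP [h1 h2] := h yU x xU; by rewrite (negbTE h1) (negbTE h2).
- by [].
Qed.

Lemma noedgeT x y : x \in DT -> y \notin DT -> y != v -> 0 < m x y -> y \in S.
Proof.
case/DTP => C CT xC yD yv mxy.
have CD := subsetP TD C CT.
case yH: (y \in H).
  apply: (hS CT yH); apply/existsP; exists x; by rewrite xC msym mxy.
have yU : y \in U0 by rewrite /U0 !inE yH.
case/Dform: CD => x0 _ eC.
have : y \in C by rewrite eC; apply: comp_closed (yU) mxy; rewrite -eC.
move=> yC; by move: yD; have -> : y \in DT by apply/DTP; exists C.
Qed.

Lemma star_tm (X : {set V}) w (Fw : {set {set V}}) : w \in H -> w \notin X -> v \notin X ->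
  Fw \subset T -> (forall C, C \in Fw -> badj m w C) -> #|Fw| = c ->
  (forall C y, C \in Fw -> y \in C -> y \notin X) ->
  tm m (~: X) c [set w] (v |: \bigcup_(C in Fw) C).
Proof.
move=> wH wX vX FT Fb Fc FX.
set Qs := \bigcup_(C in Fw) C.
have FD : forall C, C \in Fw -> C \in Dcomps m H v.
  by move=> C h; apply: (subsetP TD); apply: (subsetP FT).
have vQs : v \notin Qs.
  apply/negP => /bigcupP [C CF vC]; have := Dsub (FD C CF) vC; by rewrite eqxx andbF.
have wQ : w \notin v |: Qs.
  rewrite !inE negb_or; apply/andP; split.
    apply/eqP => wv; by move: vH; rewrite -wv wH.
  apply/negP => /bigcupP [C CF wC]; have := Dsub (FD _ CF) wC; by rewrite wH.
have sub : forall C z, C \in Fw -> z \in C -> z \in v |: Qs.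
  by move=> C z CF zC; rewrite inE; apply/orP; right; apply/bigcupP; exists C.
split.
- by rewrite sub1set inE.
- apply/subsetP => y; rewrite !inE => /orP [/eqP -> // | /bigcupP [C CF yC]]; exact: FX CF yC.
- apply/set0Pn; exists w; by rewrite inE.
- apply/set0Pn; exists v; by rewrite !inE eqxx.
split.
- by rewrite disjoints1.
- exact: conn1.
- have key : forall a, a \in v |: Qs -> connect (adj_in m (v |: Qs)) v a.
    move=> a /setU1P [-> | /bigcupP [C CF aC]]; first exact: connect0.
    have [x0 x0C mvx] := Dnbr (FD C CF).
    apply: (connect_trans (y:=x0)).
      by apply: connect1; rewrite /adj_in setU11 (sub C x0 CF x0C).
    have := Dconn (FD C CF) x0C aC.
    apply: connect_sub => p q /and3P [pC qC mpq]; apply: connect1.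
    by rewrite /adj_in (sub C p CF pC) (sub C q CF qC).
  move=> x y xQ yQ; apply: connect_trans (key y yQ).
  by rewrite (csym msym); apply: key.
- rewrite big_set1 big_setU1 //=.
  apply: leq_trans (leq_addl _ _).
  pose g := fun C : {set V} => odflt v [pick y in C | 0 < m w y].
  have gP : forall C, C \in Fw -> (g C \in C) && (0 < m w (g C)).
    move=> C CF; rewrite /g; case: pickP => [y /andP [yC my] | none] /=.
      by rewrite yC my.
    have := Fb C CF; case/existsP => y /andP [yC my]; by have := none y; rewrite yC my.
  have ginj : {in Fw &, injective g}.
    move=> C1 C2 h1 h2 e; have /andP [g1 _] := gP _ h1; have /andP [g2 _] := gP _ h2.
    apply: (Dsame (FD _ h1) (FD _ h2) g1); by rewrite e.
  have sgQ : g @: Fw \subset Qs.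
    apply/subsetP => y /imsetP [C CF ->]; apply/bigcupP; exists C => //.
    by have /andP [? _] := gP C CF.
  rewrite -Fc -(card_in_imset ginj) -sum1_card.
  apply: (leq_trans _ (sum_sub (fun y => m w y) sgQ)).
  apply: leq_sum => y /imsetP [C CF ->]; by have /andP [_ ?] := gP C CF.
Qed.

Lemma dir2 : theta_deletion R c k -> theta_deletion m c k.
Proof.
have c0 : 0 < c by apply: ltnW.
case=> X [Xk Xf]; case vX: (v \in X).
  exists X; split => //; move=> /(hm_tm msym) [P [Q t]]; apply: (Xf); apply/(hm_tm Rsym).
  exists P, Q; apply: tm_eq t => x y xU yU; symmetry; apply: (@agree (~: X)) => //; by rewrite inE vX.
have SX : S \subset X.
  apply/subsetP => w wS; apply/negPn/negP => wX; apply: (Xf); apply/(hm_tm Rsym).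
  exists [set v], [set w]; split.
  - by rewrite sub1set inE vX.
  - by rewrite sub1set inE.
  - by apply/set0Pn; exists v; rewrite inE.
  - by apply/set0Pn; exists w; rewrite inE.
  split.
  - rewrite disjoints1 inE; apply/eqP => vw; by move: vS; rewrite vw wS.
  - exact: conn1.
  - exact: conn1.
  - rewrite !big_set1 /R /reduced -/DT eqxx (negbTE (SDT wS)) (negbTE vDT) wS !andbF /=.
    exact: leq_maxr.
exists X; split => //; move=> /(hm_tm msym) [P [Q t]].
pose A := ~: X :&: (v |: DT); pose B := ~: X :\: DT.
have eU : ~: X = A :|: B.
  apply/setP => z; rewrite /A /B !inE.
  by case: (z \in X); case: (z \in DT); case: (z == v).
rewrite eU in t.
case: (glue msym (v:=v) _ _ c0 t).
- move=> x y; rewrite /A /B !inE => /andP [xX _]; rewrite xX andbT negbK => xD /andP [yD yX].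
  rewrite yX (negbTE yD) orbF /= => yv.
  apply/eqP; rewrite -leqn0 leqNgt; apply/negP => mxy.
  have yS := noedgeT xD yD yv mxy.
  by move: yX; rewrite (subsetP SX y yS).
- apply/subsetP => z; rewrite /A /B !inE => /andP [/andP [_ h] /andP [zD _]].
  by move: h; rewrite (negbTE zD) orbF.
- case=> P' [Q' t']; apply: (hfree); apply/(hm_tm msym); exists P', Q'.
  apply: tm_sub t'; apply/subsetP => z; rewrite /A !inE => /andP [_ /orP [/eqP -> // | /DTsub /andP [zH _]]].
  exact: zH.
- case=> P' [Q' t']; apply: (Xf); apply/(hm_tm Rsym); exists P', Q'.
  apply: (tm_sub (subsetDl _ DT)); apply: tm_eq t' => x y xB yB; symmetry.
  apply: agree xB yB => _ z /setDP [zX zD]; rewrite zD /=; apply/negP => zS.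
  by move: zX; rewrite inE (subsetP SX z zS).
Qed.

Hypothesis hstars : has_c_stars m c S T.

Lemma dir1 : theta_deletion m c k -> theta_deletion R c k.
Proof.
have c0 : 0 < c by apply: ltnW.
case=> X [Xk Xf]; case vX: (v \in X).
  exists X; split => //; move=> /(hm_tm Rsym) [P [Q t]]; apply: (Xf); apply/(hm_tm msym).
  exists P, Q; apply: tm_eq t => x y xU yU; apply: (@agree (~: X)) => //; by rewrite inE vX.
case: hstars => F [hF1 hF2].
have hit : forall w, w \in S -> w \notin X ->
    [exists y, (y \in X) && [exists C in F w, y \in C]].
  move=> w wS wX; apply: contraT => /negP hn; exfalso; apply: (Xf); apply/(hm_tm msym).
  have [FT [Fb Fc]] := hF1 w wS.
  exists [set w], (v |: \bigcup_(C in F w) C); apply: star_tm => //.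
  - exact: (subsetP SH w wS).
  - by rewrite vX.
  - move=> C y CF yC; apply/negP => yX; apply: hn; apply/existsP; exists y.
    rewrite yX /=; apply/existsP; exists C; by rewrite CF yC.
pose f := fun w => odflt w [pick y | (y \in X) && [exists C in F w, y \in C]].
have fP : forall w, w \in S :\: X -> (f w \in X) && [exists C in F w, f w \in C].
  move=> w /setDP [wS wX]; rewrite /f; case: pickP => [y hy|none] //=.
  have := hit w wS wX; case/existsP => y hy; by have := none y; rewrite hy.
have finj : {in S :\: X &, injective f}.
  move=> w1 w2 h1 h2 e.
  have /andP [_ /existsP [C1 /andP [C1F y1]]] := fP _ h1.
  have /andP [_ /existsP [C2 /andP [C2F y2]]] := fP _ h2.
  move/setDP: h1 => [w1S _]; move/setDP: h2 => [w2S _].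
  have [F1T _] := hF1 w1 w1S; have [F2T _] := hF1 w2 w2S.
  have e12 : C1 = C2.
    apply: (Dsame (subsetP TD _ (subsetP F1T _ C1F)) (subsetP TD _ (subsetP F2T _ C2F)) y1).
    by rewrite e.
  apply/eqP; apply/negPn/negP => ne; have := hF2 w1 w2 w1S w2S ne.
  move/mydisjP => dj; apply: (dj C1) => //; by rewrite e12.
have fsub : f @: (S :\: X) \subset X :&: DT.
  apply/subsetP => y /imsetP [w wSX ->].
  have /andP [fX /existsP [C /andP [CF fC]]] := fP w wSX.
  move/setDP: wSX => [wS _]; have [FT _] := hF1 w wS.
  rewrite inE fX /=; apply/DTP; exists C => //; exact: (subsetP FT C CF).
exists ((X :\: DT) :|: S); split.
  apply: (@leq_trans #|(X :\: DT) :|: (S :\: X)|).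
    apply: subset_leq_card; apply/subsetP => z /setUP [h | zS]; first by rewrite inE h.
    case zX: (z \in X); rewrite !inE zX /=.
      by rewrite (SDT zS).
    by rewrite zS orbT.
  rewrite cardsU; apply: leq_trans (leq_subr _ _) _.
  rewrite -(card_in_imset finj).
  apply: leq_trans (leq_add (leqnn _) (subset_leq_card fsub)) _.
  by rewrite addnC (cardsID DT X).
move=> /(hm_tm Rsym) [P [Q t]].
have DTX : DT \subset ~: ((X :\: DT) :|: S).
  apply/subsetP => z zD; rewrite !inE zD /=; apply/negP => zS.
  by move: zD; rewrite (negbTE (SDT zS)).
have eU : ~: ((X :\: DT) :|: S) = DT :|: (~: ((X :\: DT) :|: S) :\: DT).
  apply/setP => z; rewrite !inE; case zD: (z \in DT) => //=.
  by have := subsetP DTX z zD; rewrite !inE zD /= => ->.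
rewrite eU in t.
case: (glue Rsym (v:=v) _ _ c0 t).
- move=> x y xD _ /setDP [yX' yD] _.
  have /andP [_ xv] := DTsub xD.
  case: (y =P v) => [->|/eqP yv].
    by rewrite /R /reduced -/DT eqxx xD orbT.
  rewrite /R /reduced -/DT (negbTE xv) (negbTE yv) /=.
  apply/eqP; rewrite -leqn0 leqNgt; apply/negP => mxy.
  have yS := noedgeT xD yD yv mxy.
  by move: yX'; rewrite !inE yS orbT.
- apply/subsetP => z; rewrite !inE => /andP [zD /andP [zD' _]].
  by rewrite zD in zD'.
- case=> P' [Q' t']; apply: (hfree); apply/(hm_tm msym); exists P', Q'.
  have sDH : DT \subset ~: H.
    by apply/subsetP => z /DTsub /andP [zH _]; rewrite inE.
  apply: (tm_sub sDH); apply: tm_eq t' => x y xD yD.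
  apply: (@agree DT) => //; by rewrite (negbTE vDT).
- case=> P' [Q' t']; apply: (Xf); apply/(hm_tm msym); exists P', Q'.
  have sBX : ~: ((X :\: DT) :|: S) :\: DT \subset ~: X.
    apply/subsetP => z /setDP [zX' zD]; move: zX'.
    by rewrite !inE (negbTE zD) /= negb_or => /andP [].
  apply: (tm_sub sBX); apply: tm_eq t' => x y xB yB.
  apply: agree xB yB => _ z /setDP [zX' zD]; rewrite zD /=; apply/negP => zS.
  by move: zX'; rewrite !inE zS orbT.
Qed.
End Main.

Theorem mainTheorem16 (V : finType) (m : V -> V -> nat) (c k : nat) (v : V)
    (H : {set V}) (S : {set V}) (T : {set {set V}}) :
  is_multigraph m ->
  2 <= c ->
  v \notin H ->
  ~ has_minor_in m (~: H) (theta c) ->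
  (forall C, C \in Dcomps m H v -> exists2 w, w \in H & badj m w C) ->
  S \subset H ->
  T \subset Dcomps m H v ->
  has_c_stars m c S T ->
  (forall C w, C \in T -> w \in H -> badj m w C -> w \in S) ->
  (theta_deletion m c k <-> theta_deletion (reduced m c v S T) c k).
Proof.
move=> [msym _] c2 vH hfree _ SH TD hst hS; split.
  exact: (dir1 msym c2 vH hfree SH TD hS hst).
exact: (dir2 msym c2 vH hfree SH TD hS).
Qed.
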